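(* Let $\rho$ be a $d$-dimensional state that is diagonally dominant, i.e. $\rho_{ii}\ge\sum_{j\ne i}|\rho_{ij}|$ for all $i=1,\dots,d$. Then $\rho\in\mathrm{co}(\mathcal U)$. Consequently, every $d$-dimensional state $\rho$ with $\|\rho-\mathbb 1/d\|_{1\to1}\le1/d$ belongs to $\mathrm{co}(\mathcal U)$, where $\|X\|_{1\to1}=\max_{1\le i\le d}\sum_{j=1}^d|X_{ij}|$.
   Context: Fixed computational basis $\{|i\rangle\}_{i=1}^d$. $\mathcal U_k$ is the set of uniformly coherent states $|\Psi\rangle=k^{-1/2}\sum_{j\in J}e^{i\theta_j}|j\rangle$, $|J|=k$, $\theta_j\in\mathbb R$; $\mathcal U=\bigcup_{k=1}^d\mathcal U_k$ (as density matrices), and $\mathrm{co}(\mathcal U)$ its convex hull. *)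

(* Defs.v *)
From HB Require Import structures.
From mathcomp Require Import all_boot all_order all_algebra.
From mathcomp Require Import reals trigo.
From mathcomp Require Import complex.
Set Implicit Arguments. Unset Strict Implicit. Unset Printing Implicit Defensive.
Import Order.TTheory GRing.Theory Num.Theory.
Local Open Scope ring_scope.
Local Open Scope complex_scope.

Section QState.
Variable R : realType.
Local Notation C := R[i].

Definition adjmx (m n : nat) (A : 'M[C]_(m, n)) : 'M[C]_(n, m) :=
  \matrix_(i, j) Num.conj (A j i).

Definition is_state (d : nat) (rho : 'M[C]_d) : Prop :=
  [/\ adjmx rho = rho,
      forall x : 'cV[C]_d, 0 <= (adjmx x *m rho *m x) 0 0
    & \tr rho = 1].

Definition expi (t : R) : C := (cos t)%:C + 'i * (sin t)%:C.

Definition ket (d : nat) (j : 'I_d) : 'cV[C]_d := \col_i (i == j)%:R.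

Definition ucvec (d : nat) (J : {set 'I_d}) (theta : 'I_d -> R) : 'cV[C]_d :=
  ((Num.sqrt (#|J|%:R : R))^-1)%:C *: \sum_(j in J) expi (theta j) *: ket j.

(* U_k (as density matrices) *)
Definition Ucoh (d k : nat) (rho : 'M[C]_d) : Prop :=
  exists (J : {set 'I_d}) (theta : 'I_d -> R),
    #|J| = k /\ rho = ucvec J theta *m adjmx (ucvec J theta).

Definition Ucoh_all (d : nat) (rho : 'M[C]_d) : Prop :=
  exists k : nat, (1 <= k <= d)%N /\ Ucoh k rho.

Definition in_coU (d : nat) (rho : 'M[C]_d) : Prop :=
  exists (n : nat) (w : 'I_n -> R) (S : 'I_n -> 'M[C]_d),
    [/\ forall l, 0 <= w l,
        \sum_l w l = 1,
        forall l, Ucoh_all (S l)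
      & rho = \sum_l (w l)%:C *: S l].

Definition diag_dominant (d : nat) (rho : 'M[C]_d) : Prop :=
  forall i : 'I_d, \sum_(j | j != i) `|rho i j| <= rho i i.

Definition norm11 (d : nat) (X : 'M[C]_d) : C :=
  \big[Num.max/0]_(i < d) \sum_(j < d) `|X i j|.

End QState.

(* Main.v *)
Require Import Defs.
From HB Require Import structures.
From mathcomp Require Import all_boot all_order all_algebra.
From mathcomp Require Import reals trigo.
From mathcomp Require Import complex.
From mathcomp Require Import ring lra.
Import Order.TTheory GRing.Theory Num.Theory.
Local Open Scope ring_scope.
Local Open Scope complex_scope.

Section S. Variable R : realType.
Local Notation C := R[i].

Lemma polar (z : C) : exists t : R, z = `|z| * expi t.
Proof.
have [->|nz] := eqVneq z 0; first by exists 0; rewrite normr0 mul0r.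
case: z nz => a b nz.
set r := Num.sqrt (a ^+ 2 + b ^+ 2).
have hn : `|a +i* b| = r%:C by rewrite normc_def.
have r0 : 0 < r.
  rewrite lt_neqAle sqrtr_ge0 andbT eq_sym; apply/negP => /eqP r0.
  by move: nz; rewrite -normr_eq0 hn r0 eqxx.
have hr2 : r ^+ 2 = a ^+ 2 + b ^+ 2 by rewrite sqr_sqrtr // addr_ge0 // sqr_ge0.
set x := a / r. set y := b / r.
have hxy : x ^+ 2 + y ^+ 2 = 1.
  rewrite /x /y !expr_div_n -mulrDl -hr2 divff //; exact: lt0r_neq0 (exprn_gt0 _ r0).
have hx : -1 <= x <= 1.
  have : x ^+ 2 <= 1 by rewrite -hxy lerDl sqr_ge0.
  move=> h; apply/andP; split; nra.
have hs : Num.sqrt (1 - x ^+ 2) = `|y|.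
  by rewrite -hxy addrAC subrr add0r sqrtr_sqr.
exists (if 0 <= y then acos x else - acos x).
rewrite hn /expi.
have [cx sy] : cos (if 0 <= y then acos x else - acos x) = x /\
   sin (if 0 <= y then acos x else - acos x) = y.
  case: ifP => hy; rewrite ?cosN ?sinN acosK ?sin_acos ?hs //.
  - by rewrite ger0_norm.
  - by rewrite ltr0_norm ?opprK // ltNge hy.
rewrite cx sy /x /y.
apply/eqP; rewrite eq_complex /=; apply/andP; split; apply/eqP.
  field; exact: lt0r_neq0.
field; exact: lt0r_neq0.
Qed.

Lemma expiJ (t : R) : expi t * Num.conj (expi t) = 1.
Proof.
rewrite /expi; apply/eqP; rewrite eq_complex /=; apply/andP; split; apply/eqP.
  by rewrite -[RHS](cos2Dsin2 t); ring.
by ring.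
Qed.

Lemma expi0 : expi (0:R) = 1.
Proof. by rewrite /expi cos0 sin0 mulr0 addr0. Qed.

Lemma conjRC (x : R) : Num.conj (x%:C) = x%:C.
Proof. exact: conjc_real. Qed.

Lemma conjRM (x : R) (y : C) : Num.conj (x%:C * y) = x%:C * Num.conj y.
Proof. by case: y => p q; apply/eqP; rewrite eq_complex /= !mul0r !subr0 !addr0 mulrN !eqxx. Qed.

Lemma entry_ucvec d (J : {set 'I_d}) (th : 'I_d -> R) a :
  ucvec J th a ord0 = ((Num.sqrt (#|J|%:R))^-1)%:C * (if a \in J then expi (th a) else 0).
Proof.
rewrite /ucvec mxE summxE; congr (_ * _).
rewrite (eq_bigr (fun j => if j == a then expi (th a) else 0)); last first.
  move=> j _; rewrite !mxE; case: (eqVneq j a) => [->|ne]; first by rewrite mulr1.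
  by rewrite mulr0.
rewrite big_mkcond /=.
rewrite (eq_bigr (fun j => if j == a then (if a \in J then expi (th a) else 0) else 0)).
  by rewrite -big_mkcond big_pred1_eq.
move=> j _; case: (eqVneq j a) => [->|]; by case: ifP.
Qed.

Lemma entry_S d (J : {set 'I_d}) (th : 'I_d -> R) a b :
  (ucvec J th *m adjmx (ucvec J th)) a b =
  ((#|J|%:R)^-1)%:C * (if a \in J then expi (th a) else 0) *
     Num.conj (if b \in J then expi (th b) else 0).
Proof.
rewrite mxE big_ord1 [adjmx _ _ _]mxE !entry_ucvec conjRM.
have h : (Num.sqrt (#|J|%:R : R))^-1 * (Num.sqrt (#|J|%:R))^-1 = (#|J|%:R)^-1.
  by rewrite -invfM -expr2 sqr_sqrtr // ler0n.
rewrite -h rmorphM /=; ring.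
Qed.

Definition Sp d (i j : 'I_d) (t : R) : 'M[C]_d :=
  ucvec [set i; j] (fun k => if k == i then t else 0) *m
  adjmx (ucvec [set i; j] (fun k => if k == i then t else 0)).

Arguments Sp {d}.
Lemma termE d (i j a b : 'I_d) (t : R) (Wd z : C) : z = `|z| * expi t ->
  (if i == j then Wd else `|z|) * Sp i j t a b =
  if a == b then
    (a == i)%:R * ((a == j)%:R * Wd) + (a == i)%:R * ((j != i)%:R * (2^-1 * `|z|))
    + (a == j)%:R * ((i != j)%:R * (2^-1 * `|z|))
  else (a == i)%:R * (b == j)%:R * (2^-1 * z)
     + (b == i)%:R * (a == j)%:R * (2^-1 * Num.conj z).
Proof.
move=> hz; rewrite /Sp entry_S cards2 !in_set2.
have he := expiJ t. have hn := conj_normC z.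
have hcz : Num.conj z = `|z| * Num.conj (expi t) by rewrite {1}hz (normc_def z) conjRM -(normc_def z).
have h0 := expi0. have h1 : (1:R)^-1%:C = 1 by rewrite invr1.
have h2 : ((2%:R:R)^-1)%:C = 2^-1 by rewrite rmorphV ?unitfE ?pnatr_eq0 // rmorph_nat.
case: (eqVneq i j) => [?|ij]; first subst j.
  rewrite ?orbb ?eqxx /= h1.
  case: (eqVneq a i) => [?|ai]; [subst a|]; case: (eqVneq b i) => [?|bi]; try subst b;
    rewrite ?eqxx ?(negbTE ai) ?(negbTE bi) ?[i == _]eq_sym ?(negbTE ai) ?(negbTE bi) /= ?rmorph0;
    try ring: he; case: ifP => _; ring.
have ji := ij; rewrite eq_sym in ji.
rewrite ?(negbTE ij) ?(negbTE ji) /= ?h2.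
case: (eqVneq a i) => [?|ai]; [subst a| case: (eqVneq a j) => [?|aj]; [subst a|]];
case: (eqVneq b i) => [?|bi]; try subst b; try (case: (eqVneq b j) => [?|bj]; try subst b);
rewrite ?eqxx ?(negbTE ai) ?(negbTE bi) ?(negbTE aj) ?(negbTE bj) ?(negbTE ij) ?(negbTE ji)
  ?[i == _]eq_sym ?[j == _]eq_sym ?(negbTE ai) ?(negbTE bi) ?(negbTE aj) ?(negbTE bj) /= ?orbT ?h0 ?rmorph0 ?rmorph1 ?conjRM; try ring: he hz hn hcz.
all: try (case: ifP => _; ring: he hz hn hcz).
Qed.



Lemma sum_delta d (F : 'I_d -> C) a : \sum_j (a == j)%:R * F j = F a.
Proof.
rewrite (bigD1 a) //= eqxx mul1r big1 ?addr0 // => j ne.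
by rewrite eq_sym (negbTE ne) mul0r.
Qed.

Lemma sum_neq d (F : 'I_d -> C) a : \sum_j (j != a)%:R * F j = \sum_(j | j != a) F j.
Proof.
by rewrite [RHS]big_mkcond; apply: eq_bigr => j _; case: ifP => _; rewrite ?mul1r ?mul0r.
Qed.

Lemma sum2_delta d (F : 'I_d -> 'I_d -> C) a b :
  \sum_i \sum_j ((a == i)%:R * (b == j)%:R * F i j) = F a b.
Proof.
under eq_bigr do under eq_bigr do rewrite -mulrA.
under eq_bigr do rewrite -mulr_sumr sum_delta.
by rewrite sum_delta.
Qed.

Lemma coU_fin d (T : finType) (w : T -> R) (S : T -> 'M[C]_d) rho :
  (forall t, 0 <= w t) -> \sum_t w t = 1 -> (forall t, Ucoh_all (S t)) ->
  rho = \sum_t (w t)%:C *: S t -> in_coU rho.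
Proof.
move=> w0 w1 SU ->.
exists #|T|, (fun l => w (enum_val l)), (fun l => S (enum_val l)); split => //.
  by rewrite -w1 (big_enum_val (A := T)) /=.
by rewrite (big_enum_val (A := T)).
Qed.

Lemma Sp_U d (i j : 'I_d) t : Ucoh_all (Sp i j t).
Proof.
exists #|[set i; j]|; split.
  apply/andP; split; first by rewrite cards2.
  by rewrite -[X in (_ <= X)%N](card_ord d) max_card.
by exists [set i; j], (fun k => if k == i then t else 0).
Qed.

Definition reC (x : C) : R := mathcomp.real_closed.complex.Re x.
Lemma reCE (x : C) : 0 <= x -> (reC x)%:C = x.
Proof. by move=> x0; apply: RRe_real; exact: ger0_real. Qed.

Lemma part1 d (rho : 'M[C]_d) : is_state rho -> diag_dominant rho -> in_coU rho.
Proof.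
move=> [hH _ htr] hdd.
have hc : forall i j, rho j i = Num.conj (rho i j).
  by move=> i j; have := congr1 (fun M : 'M[C]_d => M j i) hH; rewrite /= mxE => <-.
have /fin_all_exists [th hth] : forall p : 'I_d * 'I_d,
    exists t : R, rho p.1 p.2 = `|rho p.1 p.2| * expi t by move=> p; exact: polar.
have hth' : forall i j, rho i j = `|rho i j| * expi (th (i, j)) by move=> i j; exact: (hth (i, j)).
pose Wd i := rho i i - \sum_(k | k != i) `|rho i k|.
pose W i j := if i == j then Wd i else `|rho i j|.
have W0 : forall i j, 0 <= W i j.
  by move=> i j; rewrite /W; case: ifP => _; [rewrite subr_ge0; exact: hdd | exact: normr_ge0].
have WR : forall i j, (reC (W i j))%:C = W i j.
  by move=> i j; apply: reCE.
apply: (@coU_fin _ ('I_d * 'I_d)%type (fun p => reC (W p.1 p.2)) (fun p => Sp p.1 p.2 (th p))).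
- by move=> p; rewrite -ler0c WR.
- apply: complexI; rewrite rmorph_sum rmorph1 /=.
  under eq_bigr do rewrite WR.
  rewrite -(pair_bigA _ (fun i j => W i j)) -htr /mxtrace; apply: eq_bigr => i _.
  rewrite (bigD1 i) //= /W eqxx.
  under eq_bigr => j ji do rewrite eq_sym (negbTE ji).
  by rewrite /Wd subrK.
- by move=> p; exact: Sp_U.
apply/matrixP => a b; rewrite summxE.
under eq_bigr do rewrite mxE WR.
rewrite (eq_bigr (fun p => W p.1 p.2 * Sp p.1 p.2 (th (p.1, p.2)) a b)); last by case.
rewrite -(pair_bigA _ (fun i j => W i j * Sp i j (th (i, j)) a b)) /=.
under eq_bigr => i _ do under eq_bigr => j _ do rewrite (@termE _ i j a b _ (Wd i) _ (hth' i j)).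
case: (eqVneq a b) => [<-{b}|ab].
  under eq_bigr do rewrite big_split big_split /=.
  rewrite big_split big_split /=.
  have S1 : \sum_i \sum_j (a == i)%:R * ((a == j)%:R * Wd i) = Wd a.
    rewrite -[RHS](@sum2_delta d (fun i j => Wd i) a a).
    by apply: eq_bigr => i _; apply: eq_bigr => j _; rewrite mulrA.
  have S2 : \sum_i \sum_j (a == i)%:R * ((j != i)%:R * (2^-1 * `|rho i j|))
      = 2^-1 * \sum_(j | j != a) `|rho a j|.
    under eq_bigr do rewrite -mulr_sumr.
    by rewrite sum_delta sum_neq mulr_sumr.
  have S3 : \sum_i \sum_j (a == j)%:R * ((i != j)%:R * (2^-1 * `|rho i j|))
      = 2^-1 * \sum_(j | j != a) `|rho a j|.
    rewrite exchange_big /=.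
    under eq_bigr do rewrite -mulr_sumr.
    rewrite sum_delta sum_neq mulr_sumr.
    by apply: eq_bigr => j _; rewrite hc norm_conjC.
  rewrite S1 S2 S3 /Wd.
  set s := \sum_(j | j != a) _.
  by field.
under eq_bigr do rewrite big_split /=.
rewrite big_split /= !sum2_delta -hc.
by field.
Qed.




Lemma maxC (x y : R) : (Num.max x y)%:C = Num.max (x%:C : C) y%:C.
Proof. by rewrite /Order.max ltcR; case: ifP. Qed.

Lemma le_norm11 d (X : 'M[C]_d) i : \sum_j `|X i j| <= norm11 X.
Proof.
pose g k := reC (\sum_j `|X k j|).
have hg : forall k, (g k)%:C = \sum_j `|X k j|.
  by move=> k; apply: reCE; apply: sumr_ge0 => j _; exact: normr_ge0.
rewrite /norm11 -hg.
under eq_bigr do rewrite -hg.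
rewrite -(big_morph _ maxC (erefl (0:R)%:C)) lecR.
exact: le_bigmax.
Qed.

Lemma part2 d (rho : 'M[C]_d) : is_state rho ->
     norm11 (rho - (d%:R)^-1%:M) <= (d%:R)^-1 -> in_coU rho.
Proof.
move=> st hn; apply: part1 => //.
case: st => hH _ _.
move=> i.
have hc : forall i j, rho j i = Num.conj (rho i j).
  by move=> k j; have := congr1 (fun M : 'M[C]_d => M j k) hH; rewrite /= mxE => <-.
have hr : rho i i \is Num.real by apply/CrealP; rewrite -hc.
set c : C := (d%:R)^-1.
have cr : c \is Num.real by rewrite rpredV rpred_nat.
have := le_trans (@le_norm11 d (rho - c%:M) i) hn.
rewrite (bigD1 i) //= !mxE eqxx mulr1n.
under eq_bigr => j ji do rewrite !mxE eq_sym (negbTE ji) mulr0n subr0.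
move=> h.
have h2 : c - rho i i <= `|rho i i - c|.
  by rewrite distrC; apply: real_ler_norm; rewrite rpredB.
set s := \sum_(j | j != i) _ in h *.
have : s <= c - `|rho i i - c| by rewrite lerBrDl.
move=> h3; apply: (le_trans h3).
by rewrite lerBlDl -lerBlDr.
Qed.
End S.

Theorem lemma13 (R : realType) (d : nat) :
  (forall rho : 'M[R[i]]_d, is_state rho -> diag_dominant rho -> in_coU rho) /\
  (forall rho : 'M[R[i]]_d, is_state rho ->
     norm11 (rho - (d%:R)^-1%:M) <= (d%:R)^-1 -> in_coU rho).
Proof. split; [exact: part1 | exact: part2]. Qed.
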